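(* For every $\sigma\in\mathcal{SC}$, $\sigma\sim\mathrm{mcl}(\sigma)$.
   Context: Contract terms over base types $BT$ and labels $\mathcal L$: $\sigma::=\mathbf 1\mid ?\mathtt t.\sigma\mid !\mathtt t.\sigma\mid !(\sigma).\sigma\mid ?(\sigma).\sigma\mid \sum_{i\in I}?l_i.\sigma_i\mid \bigoplus_{i\in I}!l_i.\sigma_i\mid \mu x.\sigma\mid x$ ($I$ finite nonempty, labels distinct). $\mathcal{SC}$ = closed guarded terms. Actions $\mathsf{Act}=\{?l,!l\}\cup\{?\mathtt t,!\mathtt t\}\cup\{?(\sigma),!(\sigma):\sigma\in\mathcal{SC}\}$. LTS: $\mathbf 1\xrightarrow\checkmark$; $\lambda.\sigma\xrightarrow\lambda\sigma$ for prefixes (including $!l.\sigma$); $\bigoplus_{i\in I}!l_i.\sigma_i\xrightarrow\tau!l_i.\sigma_i$ for $|I|>1$; $\sum ?l_i.\sigma_i\xrightarrow{?l_i}\sigma_i$; $\mu x.\sigma\xrightarrow\tau\sigma[\mu x.\sigma/x]$. Strong bisimilarity $\sim$: largest $R$ such that $\sigma_1R\sigma_2$ implies $\sigma_1\xrightarrow\checkmark$ iff $\sigma_2\xrightarrow\checkmark$, and for each $\mu\in\mathsf{Act}\cup\{\tau\}$ every $\sigma_1\xrightarrow\mu\sigma_1'$ is matched by some $\sigma_2\xrightarrow\mu\sigma_2'$ with $\sigma_1'R\sigma_2'$ and vice versa. A substitution $s$ is a finite partial map from variables to $\mathcal{SC}$, applied to free occurrences. $\mathrm{mclo}(\sigma,s)$: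 $\mathbf 1\mapsto\mathbf 1$; $x\mapsto x$; $!(\sigma^m).\sigma'\mapsto!(\sigma^m s).\mathrm{mclo}(\sigma',s)$; $?(\sigma^m).\sigma'\mapsto?(\sigma^m s).\mathrm{mclo}(\sigma',s)$; base-type prefixes and sums are mapped componentwise (keeping prefixes); $\mu x.\sigma'\mapsto\mu x.\mathrm{mclo}(\sigma',s')$ where $s'$ maps $x$ to $(\mu x.\sigma')s$ and agrees with $s$ elsewhere. $\mathrm{mcl}(\sigma)=\mathrm{mclo}(\sigma,\varepsilon)$ with $\varepsilon$ the empty substitution. *)

(* Defs.v *)
From Stdlib Require Import List Arith PeanoNat.
Import ListNotations.

Set Implicit Arguments.

Section Contracts.
Variables (BT L : Type).

(* Variables are named by natural numbers.
   - Ext bs  = \sum_{i in I} ?l_i.sigma_i   (external choice / branching)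
   - Int bs  = \bigoplus_{i in I} !l_i.sigma_i (internal choice);
     the output prefix !l.sigma is Int [(l, sigma)]. *)
Inductive term : Type :=
| One   : term
| InT   : BT -> term -> term
| OutT  : BT -> term -> term
| OutM  : term -> term -> term
| InM   : term -> term -> term
| Ext   : list (L * term) -> term
| Int   : list (L * term) -> term
| Mu    : nat -> term -> term
| Var   : nat -> term.

Fixpoint wf (s : term) : Prop :=
  match s with
  | One | Var _ => True
  | InT _ s' | OutT _ s' | Mu _ s' => wf s'
  | OutM m s' | InM m s' => wf m /\ wf s'
  | Ext bs | Int bs =>
      bs <> [] /\ NoDup (map fst bs) /\
      (fix all_wf (l : list (L * term)) : Prop :=
         match l with [] => True | (_, t) :: l' => wf t /\ all_wf l' end) bs
  end.

Fixpoint free_in (x : nat) (s : term) : Prop :=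
  match s with
  | One => False
  | Var y => x = y
  | InT _ s' | OutT _ s' => free_in x s'
  | OutM m s' | InM m s' => free_in x m \/ free_in x s'
  | Ext bs | Int bs =>
      (fix ex_free (l : list (L * term)) : Prop :=
         match l with [] => False | (_, t) :: l' => free_in x t \/ ex_free l' end) bs
  | Mu y s' => x <> y /\ free_in x s'
  end.

Definition closed (s : term) : Prop := forall x, ~ free_in x s.

(* every free occurrence of x in s lies under a prefix (or a choice) *)
Fixpoint guarded_in (x : nat) (s : term) : Prop :=
  match s with
  | Var y => x <> y
  | Mu y s' => x = y \/ guarded_in x s'
  | _ => True
  end.

Fixpoint guarded (s : term) : Prop :=
  match s with
  | One | Var _ => True
  | InT _ s' | OutT _ s' => guarded s'
  | OutM m s' | InM m s' => guarded m /\ guarded s'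
  | Ext bs | Int bs =>
      (fix all_g (l : list (L * term)) : Prop :=
         match l with [] => True | (_, t) :: l' => guarded t /\ all_g l' end) bs
  | Mu x s' => guarded_in x s' /\ guarded s'
  end.

Definition SC (s : term) : Prop := wf s /\ closed s /\ guarded s.

(* Substitutions: finite partial maps from variables to terms,
   represented as association lists (first binding wins). *)
Definition subst_t := list (nat * term).

Fixpoint lookup (x : nat) (s : subst_t) : option term :=
  match s with
  | [] => None
  | (y, t) :: s' => if Nat.eqb x y then Some t else lookup x s'
  end.

Definition remove_var (x : nat) (s : subst_t) : subst_t :=
  filter (fun p => negb (Nat.eqb (fst p) x)) s.

Fixpoint subst (s : subst_t) (t : term) : term :=
  match t with
  | One => One
  | Var x => match lookup x s with Some u => u | None => Var x end
  | InT b t' => InT b (subst s t')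
  | OutT b t' => OutT b (subst s t')
  | OutM m t' => OutM (subst s m) (subst s t')
  | InM m t' => InM (subst s m) (subst s t')
  | Ext bs => Ext (map (fun p => (fst p, subst s (snd p))) bs)
  | Int bs => Int (map (fun p => (fst p, subst s (snd p))) bs)
  | Mu x t' => Mu x (subst (remove_var x s) t')
  end.

Fixpoint mclo (t : term) (s : subst_t) : term :=
  match t with
  | One => One
  | Var x => Var x
  | OutM m t' => OutM (subst s m) (mclo t' s)
  | InM m t' => InM (subst s m) (mclo t' s)
  | InT b t' => InT b (mclo t' s)
  | OutT b t' => OutT b (mclo t' s)
  | Ext bs => Ext (map (fun p => (fst p, mclo (snd p) s)) bs)
  | Int bs => Int (map (fun p => (fst p, mclo (snd p) s)) bs)
  | Mu x t' => Mu x (mclo t' ((x, subst s (Mu x t')) :: remove_var x s))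
  end.

Definition mcl (t : term) : term := mclo t [].

Inductive action : Type :=
| ALin  : L -> action
| ALout : L -> action
| ATin  : BT -> action
| ATout : BT -> action
| AMin  : term -> action
| AMout : term -> action.

Inductive label : Type :=
| Tau : label
| Act : action -> label.

Definition ticks (t : term) : Prop := t = One.

Inductive step : term -> label -> term -> Prop :=
| st_InT  : forall b t, step (InT b t) (Act (ATin b)) t
| st_OutT : forall b t, step (OutT b t) (Act (ATout b)) t
| st_OutM : forall m t, SC m -> step (OutM m t) (Act (AMout m)) t
| st_InM  : forall m t, SC m -> step (InM m t) (Act (AMin m)) t
| st_OutL : forall l t, step (Int [(l, t)]) (Act (ALout l)) t
| st_IntTau : forall bs l t, 1 < length bs -> In (l, t) bs ->
    step (Int bs) Tau (Int [(l, t)])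
| st_Ext  : forall bs l t, In (l, t) bs -> step (Ext bs) (Act (ALin l)) t
| st_Mu   : forall x t, step (Mu x t) Tau (subst [(x, Mu x t)] t).

Definition is_bisimulation (R : term -> term -> Prop) : Prop :=
  forall p q, R p q ->
    (ticks p <-> ticks q) /\
    (forall mu p', step p mu p' -> exists q', step q mu q' /\ R p' q') /\
    (forall mu q', step q mu q' -> exists p', step p mu p' /\ R p' q').

Definition bisimilar (p q : term) : Prop :=
  exists R, is_bisimulation R /\ R p q.

End Contracts.

Arguments One {BT L}.

(* Main.v *)
Require Import Defs.
From Stdlib Require Import List.
From Stdlib Require Import Arith PeanoNat.
Import ListNotations.

Section Proof.
Variables BT L : Type.
Notation tm := (term BT L).
Notation sb := (subst_t BT L).

Section Ind.
Variable P : tm -> Prop.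
Hypotheses (H1 : P One)
  (H2 : forall b t, P t -> P (InT b t))
  (H3 : forall b t, P t -> P (OutT b t))
  (H4 : forall m t, P m -> P t -> P (OutM m t))
  (H5 : forall m t, P m -> P t -> P (InM m t))
  (H6 : forall bs, (forall l t, In (l, t) bs -> P t) -> P (Ext bs))
  (H7 : forall bs, (forall l t, In (l, t) bs -> P t) -> P (Int bs))
  (H8 : forall x t, P t -> P (Mu x t))
  (H9 : forall x, P (Var BT L x)).

Fixpoint tind (t : tm) : P t :=
  match t with
  | One => H1
  | InT b t => H2 b t (tind t)
  | OutT b t => H3 b t (tind t)
  | OutM m t => H4 m t (tind m) (tind t)
  | InM m t => H5 m t (tind m) (tind t)
  | Ext bs => H6 bs ((fix go (bs : list (L * tm)) : forall l t, In (l, t) bs -> P t :=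
       match bs with
       | [] => fun l t H => False_ind _ H
       | (l0, t0) :: bs' => fun l t H =>
           match H with
           | or_introl e => eq_ind t0 P (tind t0) t (f_equal snd e)
           | or_intror H' => go bs' l t H'
           end
       end) bs)
  | Int bs => H7 bs ((fix go (bs : list (L * tm)) : forall l t, In (l, t) bs -> P t :=
       match bs with
       | [] => fun l t H => False_ind _ H
       | (l0, t0) :: bs' => fun l t H =>
           match H with
           | or_introl e => eq_ind t0 P (tind t0) t (f_equal snd e)
           | or_intror H' => go bs' l t H'
           end
       end) bs)
  | Mu x t => H8 x t (tind t)
  | Var _ _ x => H9 x
  end.
End Ind.

Lemma free_Ext x (bs : list (L * tm)) :
  free_in x (Ext bs) <-> exists l t, In (l, t) bs /\ free_in x t.
Proof.
  induction bs as [|[l t] bs IH]; simpl in *.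
  - split; [tauto| intros (?&?&[]&_)].
  - rewrite IH. split.
    + intros [H|(l'&t'&Hi&Hf)]; eauto 6.
    + intros (l'&t'&[E|Hi]&Hf); [inversion E; subst; auto| eauto 6].
Qed.

Lemma free_Int x (bs : list (L * tm)) :
  free_in x (Int bs) <-> exists l t, In (l, t) bs /\ free_in x t.
Proof.
  induction bs as [|[l t] bs IH]; simpl in *.
  - split; [tauto| intros (?&?&[]&_)].
  - rewrite IH. split.
    + intros [H|(l'&t'&Hi&Hf)]; eauto 6.
    + intros (l'&t'&[E|Hi]&Hf); [inversion E; subst; auto| eauto 6].
Qed.

Lemma lookup_rm x y (s : sb) :
  lookup x (remove_var y s) = if Nat.eqb x y then None else lookup x s.
Proof.
  induction s as [|[z u] s IH]; simpl.
  - destruct (Nat.eqb x y); auto.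
  - unfold remove_var in *; simpl.
    destruct (Nat.eqb_spec z y); simpl.
    + rewrite IH. subst. destruct (Nat.eqb_spec x y); auto.
    + simpl. destruct (Nat.eqb_spec x z); rewrite ?IH;
      destruct (Nat.eqb_spec x y); subst; auto; congruence.
Qed.

Lemma lookup_app x (a b : sb) :
  lookup x (a ++ b) = match lookup x a with Some u => Some u | None => lookup x b end.
Proof.
  induction a as [|[z u] a IH]; simpl; auto.
  destruct (Nat.eqb x z); auto.
Qed.

Definition mcls (s : sb) : sb := map (fun p => (fst p, mcl (snd p))) s.

Lemma lookup_mcls x s : lookup x (mcls s) = option_map (@mcl BT L) (lookup x s).
Proof.
  induction s as [|[z u] s IH]; simpl; auto.
  destruct (Nat.eqb x z); auto.
Qed.

Lemma subst_ext (t : tm) : forall a b,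
  (forall x, free_in x t -> lookup x a = lookup x b) -> subst a t = subst b t.
Proof.
  induction t using tind; intros a c Hab; simpl in *; f_equal; eauto.
  - apply map_ext_in. intros [l t] Hi. simpl. f_equal. eapply H; eauto.
    intros x Hx. apply Hab. apply free_Ext. eauto.
  - apply map_ext_in. intros [l t] Hi. simpl. f_equal. eapply H; eauto.
    intros x Hx. apply Hab. apply free_Int. eauto.
  - apply IHt. intros z Hz. rewrite !lookup_rm.
    destruct (Nat.eqb_spec z x); auto.
  - rewrite Hab; auto.
Qed.

Lemma subst_lk (t : tm) a b : (forall x, lookup x a = lookup x b) -> subst a t = subst b t.
Proof. intros; apply subst_ext; auto. Qed.

Lemma subst_nil (t : tm) : subst [] t = t.
Proof.
  induction t using tind; simpl; f_equal; auto.
  - rewrite <- (map_id bs) at 2. apply map_ext_in. intros [l t] Hi; simpl; f_equal; eauto.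
  - rewrite <- (map_id bs) at 2. apply map_ext_in. intros [l t] Hi; simpl; f_equal; eauto.
Qed.

Lemma mclo_ext (t : tm) : forall a b,
  (forall x, free_in x t -> lookup x a = lookup x b) -> mclo t a = mclo t b.
Proof.
  induction t using tind; intros a c Hab; simpl in *; f_equal; eauto.
  - apply subst_ext; auto.
  - apply subst_ext; auto.
  - apply map_ext_in. intros [l t] Hi. simpl. f_equal. eapply H; eauto.
    intros x Hx. apply Hab. apply free_Ext. eauto.
  - apply map_ext_in. intros [l t] Hi. simpl. f_equal. eapply H; eauto.
    intros x Hx. apply Hab. apply free_Int. eauto.
  - apply IHt. intros z Hz. simpl. rewrite !lookup_rm.
    destruct (Nat.eqb_spec z x); auto.
    f_equal. f_equal. apply subst_ext. intros w Hw. rewrite !lookup_rm.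
    destruct (Nat.eqb_spec w x); auto.
Qed.

Lemma mclo_lk (t : tm) a b : (forall x, lookup x a = lookup x b) -> mclo t a = mclo t b.
Proof. intros; apply mclo_ext; auto. Qed.

Definition cv (s : sb) := forall x u, lookup x s = Some u -> closed u.

Lemma cv_rm y s : cv s -> cv (remove_var y s).
Proof. intros H x u E. rewrite lookup_rm in E. destruct (Nat.eqb x y); [discriminate|eauto]. Qed.

Lemma closed_subst_id (u : tm) S : closed u -> subst S u = u.
Proof.
  intros Hc. rewrite <- (subst_nil u) at 2. apply subst_ext.
  intros x Hx. destruct (Hc x Hx).
Qed.

Lemma subst_comp (m : tm) : forall S T, cv T -> subst S (subst T m) = subst (T ++ S) m.
Proof.
  induction m using tind; intros S T HT; simpl; f_equal; auto.
  - rewrite map_map. apply map_ext_in. intros [l t] Hi; simpl; f_equal; eauto.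
  - rewrite map_map. apply map_ext_in. intros [l t] Hi; simpl; f_equal; eauto.
  - rewrite IHm by (apply cv_rm; auto). apply subst_lk. intros z.
    rewrite !lookup_app, !lookup_rm, lookup_app. destruct (Nat.eqb z x); auto.
  - rewrite lookup_app. destruct (lookup x T) eqn:E; simpl.
    + apply closed_subst_id. eauto.
    + auto.
Qed.

Lemma free_subst (t : tm) : forall s z, cv s -> free_in z (subst s t) ->
  free_in z t /\ lookup z s = None.
Proof.
  induction t using tind; intros s z Hs Hf; simpl in *; try tauto.
  - destruct (IHt s z Hs Hf); auto.
  - destruct (IHt s z Hs Hf); auto.
  - destruct Hf as [Hf|Hf]; [destruct (IHt1 s z Hs Hf)|destruct (IHt2 s z Hs Hf)]; auto.
  - destruct Hf as [Hf|Hf]; [destruct (IHt1 s z Hs Hf)|destruct (IHt2 s z Hs Hf)]; auto.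
  - apply free_Ext in Hf. destruct Hf as (l&t'&Hi&Hf).
    apply in_map_iff in Hi. destruct Hi as ([l0 t0]&E&Hi). simpl in E. inversion E; subst.
    destruct (H _ _ Hi s z Hs Hf). split; auto. apply free_Ext; eauto.
  - apply free_Int in Hf. destruct Hf as (l&t'&Hi&Hf).
    apply in_map_iff in Hi. destruct Hi as ([l0 t0]&E&Hi). simpl in E. inversion E; subst.
    destruct (H _ _ Hi s z Hs Hf). split; auto. apply free_Int; eauto.
  - destruct Hf as [Hne Hf]. destruct (IHt _ _ (cv_rm x s Hs) Hf) as [A B].
    rewrite lookup_rm in B. destruct (Nat.eqb_spec z x); [congruence|]. auto.
  - destruct (lookup x s) eqn:E.
    + destruct (Hs _ _ E z Hf).
    + simpl in Hf. subst. auto.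
Qed.

Lemma cv_app (r s : sb) : cv r -> cv s -> cv (r ++ s).
Proof.
  intros Hr Hs x u E. rewrite lookup_app in E.
  destruct (lookup x r) eqn:E'; [inversion E; subst|]; eauto.
Qed.

Lemma ML (t : tm) : forall r s, cv r -> cv s ->
  (forall x, lookup x r = None \/ lookup x s = None) ->
  (forall x, free_in x t -> lookup x r <> None \/ lookup x s <> None) ->
  mclo (subst s t) r = subst (mcls s) (mclo t (r ++ s)).
Proof.
  induction t using tind; intros r s Hr Hs Hd Hi; simpl in *.
  - auto.
  - f_equal; auto.
  - f_equal; auto.
  - f_equal.
    + rewrite !subst_comp; auto using cv_app.
      apply subst_ext. intros x Hx. rewrite !lookup_app, lookup_mcls.
      specialize (Hd x); destruct (lookup x r), (lookup x s); simpl; intuition congruence.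
    + apply IHt2; auto.
  - f_equal.
    + rewrite !subst_comp; auto using cv_app.
      apply subst_ext. intros x Hx. rewrite !lookup_app, lookup_mcls.
      specialize (Hd x); destruct (lookup x r), (lookup x s); simpl; intuition congruence.
    + apply IHt2; auto.
  - f_equal. rewrite !map_map. apply map_ext_in. intros [l t] Hin; simpl. f_equal.
    eapply H; eauto. intros x Hx. apply Hi. apply free_Ext; eauto.
  - f_equal. rewrite !map_map. apply map_ext_in. intros [l t] Hin; simpl. f_equal.
    eapply H; eauto. intros x Hx. apply Hi. apply free_Int; eauto.
  - f_equal.
    assert (Hr' : cv ((x, Mu x (subst (remove_var x r) (subst (remove_var x s) t)))
                       :: remove_var x r)).
    { intros z u E. simpl in E. destruct (Nat.eqb z x).
      - inversion E; subst. intros w Hw. simpl in Hw. destruct Hw as [Hne Hw].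
        apply free_subst in Hw; [|apply cv_rm; auto]. destruct Hw as [Hw1 Hw2].
        apply free_subst in Hw1; [|apply cv_rm; auto]. destruct Hw1 as [Hw3 Hw4].
        rewrite lookup_rm in Hw2, Hw4. destruct (Nat.eqb_spec w x); [contradiction|].
        destruct (Hi w (conj n Hw3)); contradiction.
      - apply (cv_rm x r Hr z). exact E. }
    rewrite IHt; auto using cv_rm.
    2:{ intros z; simpl; rewrite !lookup_rm; destruct (Nat.eqb z x); auto. }
    2:{ intros z Hz; simpl; rewrite !lookup_rm; destruct (Nat.eqb_spec z x);
        [left; discriminate | apply Hi; auto]. }
    rewrite (subst_lk _ (mcls (remove_var x s)) (remove_var x (mcls s))).
    2:{ intro z. rewrite lookup_mcls, !lookup_rm, lookup_mcls.
        destruct (Nat.eqb z x); auto. }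
    f_equal. apply mclo_lk. intros z. simpl. rewrite !lookup_app, !lookup_rm.
    destruct (Nat.eqb_spec z x).
    + f_equal. f_equal. rewrite subst_comp by (apply cv_rm; auto).
      apply subst_lk. intros w. rewrite lookup_app, !lookup_rm, lookup_app.
      destruct (Nat.eqb w x); auto.
      specialize (Hd w); destruct (lookup w r), (lookup w s); intuition congruence.
    + rewrite lookup_app. specialize (Hd z); destruct (lookup z r), (lookup z s); intuition congruence.
  - destruct (lookup x s) eqn:E; simpl; rewrite lookup_mcls, E; simpl; auto.
    unfold mcl. apply mclo_ext. intros z Hz. destruct (Hs _ _ E z Hz).
Qed.


Lemma mcl_Mu x (t : tm) : mcl (Mu x t) = Mu x (mclo t [(x, Mu x t)]).
Proof. unfold mcl. simpl. rewrite subst_nil. reflexivity. Qed.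

Lemma mcl_unfold x (t : tm) : closed (Mu x t) ->
  mcl (subst [(x, Mu x t)] t) = subst [(x, mcl (Mu x t))] (mclo t [(x, Mu x t)]).
Proof.
  intros Hc. unfold mcl at 1. rewrite ML.
  - reflexivity.
  - intros z u E; discriminate.
  - intros z u E; simpl in E; destruct (Nat.eqb z x); inversion E; subst; auto.
  - intros z; auto.
  - intros z Hz. right. simpl. destruct (Nat.eqb_spec z x); [discriminate|].
    exfalso. apply (Hc z). simpl. auto.
Qed.

Lemma closed_unfold x (t : tm) : closed (Mu x t) -> closed (subst [(x, Mu x t)] t).
Proof.
  intros Hc z Hz. apply free_subst in Hz.
  - destruct Hz as [A B]. simpl in B. destruct (Nat.eqb_spec z x); [discriminate|].
    apply (Hc z). simpl. auto.
  - intros w u E; simpl in E; destruct (Nat.eqb w x); inversion E; subst; auto.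
Qed.

Definition Rm (p q : tm) : Prop := closed p /\ q = mcl p.

Lemma Rm_bisim : is_bisimulation Rm.
Proof.
  intros p q [Hc ->]. split; [|split].
  - destruct p; unfold ticks, mcl; simpl; split; intro; congruence.
  - intros mu p' Hst. destruct Hst.
    + exists (mcl t). split; [constructor|]. split; auto.
      all: try (intros z Hz; apply (Hc z); simpl; auto).
    + exists (mcl t). split; [constructor|]. split; auto.
      all: try (intros z Hz; apply (Hc z); simpl; auto).
    + exists (mcl t). split.
      * unfold mcl; simpl. rewrite subst_nil. constructor; auto.
      * split; auto. intros z Hz; apply (Hc z); simpl; auto.
    + exists (mcl t). split.
      * unfold mcl; simpl. rewrite subst_nil. constructor; auto.
      * split; auto. intros z Hz; apply (Hc z); simpl; auto.
    + exists (mcl t). split; [constructor|]. split; auto.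
      all: try (intros z Hz; apply (Hc z); simpl; auto).
    + exists (Int [(l, mcl t)]). split.
      * unfold mcl; simpl. apply st_IntTau; [rewrite length_map; auto|].
        apply in_map_iff. exists (l, t). auto.
      * split; [|reflexivity]. intros z Hz. apply (Hc z). apply free_Int.
        apply free_Int in Hz. destruct Hz as (l'&t'&[E|[]]&Hz). inversion E; subst. eauto.
    + exists (mcl t). split.
      * unfold mcl; simpl. constructor. apply in_map_iff. exists (l, t). auto.
      * split; auto. intros z Hz. apply (Hc z). apply free_Ext. eauto.
    + exists (subst [(x, mcl (Mu x t))] (mclo t [(x, Mu x t)])). split.
      * rewrite mcl_Mu. constructor.
      * split; [apply closed_unfold; auto|]. rewrite mcl_unfold; auto.
  - intros mu q' Hst. destruct p.
    + inversion Hst.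
    + inversion Hst; subst. exists p. split; [constructor|]. split; auto.
      all: try (intros z Hz; apply (Hc z); simpl; auto).
    + inversion Hst; subst. exists p. split; [constructor|]. split; auto.
      all: try (intros z Hz; apply (Hc z); simpl; auto).
    + unfold mcl in Hst; simpl in Hst. rewrite subst_nil in Hst.
      inversion Hst; subst. exists p2. split; [constructor; auto|]. split; auto.
      all: try (intros z Hz; apply (Hc z); simpl; auto).
    + unfold mcl in Hst; simpl in Hst. rewrite subst_nil in Hst.
      inversion Hst; subst. exists p2. split; [constructor; auto|]. split; auto.
      all: try (intros z Hz; apply (Hc z); simpl; auto).
    + unfold mcl in Hst; simpl in Hst. inversion Hst; subst.
      match goal with Hm : In _ (map _ _) |- _ => apply in_map_iff in Hm; destruct Hm as ([l1 t0]&E&Hin) end. simpl in E. inversion E; subst.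
      exists t0. split; [constructor; auto|]. split; auto.
      intros z Hz. apply (Hc z). apply free_Ext. eauto.
    + unfold mcl in Hst; simpl in Hst. inversion Hst; subst.
      * match goal with Hm : _ = map _ _ |- _ => rename Hm into H0 end.
        destruct l as [|[l2 t0] [|]]; simpl in H0; inversion H0; subst.
        exists t0. split; [constructor|]. split; auto.
        intros z Hz. apply (Hc z). simpl. auto.
      * match goal with Hm : 1 < length _ |- _ => rewrite length_map in Hm end.
        match goal with Hm : In _ (map _ _) |- _ => apply in_map_iff in Hm; destruct Hm as ([l1 t0]&E&Hin) end. simpl in E. inversion E; subst.
        exists (Int [(l0, t0)]). split; [constructor; auto|]. split; [|reflexivity].
        intros z Hz. apply (Hc z). apply free_Int.
        apply free_Int in Hz. destruct Hz as (l'&t'&[E'|[]]&Hz). inversion E'; subst. eauto.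
    + rewrite mcl_Mu in Hst. inversion Hst; subst.
      exists (subst [(n, Mu n p)] p). split; [constructor|].
      split; [apply closed_unfold; auto|]. rewrite mcl_unfold; auto. rewrite mcl_Mu. reflexivity.
    + exfalso. apply (Hc n). simpl. auto.
Qed.

End Proof.

Theorem mainTheorem20 (BT L : Type) (sigma : term BT L) :
  SC sigma -> bisimilar sigma (mcl sigma).
Proof.
  intros [_ [Hc _]]. exists (@Rm BT L). split.
  - apply Rm_bisim.
  - split; auto.
Qed.
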